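(* Let $R$ be an integral domain, let $\delta,\gamma,p,q\in R$ with $2\gamma=p\delta$, and let $a=\mathcal{W}(\delta,\gamma,p,q)$. Then $L^{(-1,p)}(a)=a$, i.e. for all $n\ge0$ $$a_n=\sum_{i=0}^n\binom{n}{i}(-1)^ip^{n-i}a_i,$$ and consequently, for all $n\ge1$, $$\sum_{i=0}^{n-1}\binom{n}{i}(-1)^ip^{n-i}a_i=\begin{cases}0,& n \text{ even},\\ 2a_n,& n\text{ odd}.\end{cases}$$
   Context: $\mathcal{W}(\delta,\gamma,p,q)$ denotes the sequence $(a_n)_{n\ge0}$ with $a_0=\delta$, $a_1=\gamma$, $a_n=pa_{n-1}-qa_{n-2}$ for $n\ge2$. For $h,y\in R$, $L^{(h,y)}(a)$ is the sequence with $n$-th term $\sum_{i=0}^n\binom{n}{i}h^iy^{n-i}a_i$. *)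

(* Defs.v *)
From mathcomp Require Import all_boot all_algebra.
Set Implicit Arguments. Unset Strict Implicit. Unset Printing Implicit Defensive.
Import GRing.Theory.
Local Open Scope ring_scope.

(* W(delta,gamma,p,q): a_0 = delta, a_1 = gamma, a_n = p a_{n-1} - q a_{n-2}. *)
Fixpoint Wpair (R : nzRingType) (delta gamma p q : R) (n : nat) : R * R :=
  match n with
  | 0%N => (delta, gamma)
  | n'.+1 => let: (x, y) := Wpair delta gamma p q n' in (y, p * y - q * x)
  end.

Definition W (R : nzRingType) (delta gamma p q : R) (n : nat) : R :=
  (Wpair delta gamma p q n).1.

Definition Ltrans (R : nzRingType) (h y : R) (a : nat -> R) (n : nat) : R :=
  \sum_(i < n.+1) ('C(n, i))%:R * h ^+ i * y ^+ (n - i) * a i.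

(* Main.v *)
Require Import Defs.
From mathcomp Require Import all_boot all_algebra.
From mathcomp Require Import ring.
From Stdlib Require Import FunctionalExtensionality.
Local Open Scope ring_scope.
Import GRing.Theory.

Section S.
Variable (R : comRingType) (p q : R) (a : nat -> R).

Definition Sm (n k : nat) : R :=
  \sum_(i < n.+1) ('C(n, i))%:R * (-1) ^+ i * p ^+ (n - i) * a (k + i).

Lemma Sm_rec n k : Sm n.+1 k = p * Sm n k - Sm n k.+1.
Proof.
rewrite /Sm big_ord_recl /= subn0 addn0.
under eq_bigr => i _ do rewrite binS natrD !mulrDl.
rewrite big_split /=.
rewrite [in p * _]big_ord_recl /=.
have -> : \sum_(i < n.+1) ('C(n, i.+1))%:R * (-1) ^+ (bump 0 i) * p ^+ (n.+1 - bump 0 i) *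
     a (k + bump 0 i) =
   p * \sum_(i < n) ('C(n, bump 0 i))%:R * (-1) ^+ bump 0 i * p ^+ (n - bump 0 i) *
     a (k + bump 0 i).
  rewrite big_ord_recr /= bin_small // mul0r !mul0r addr0 mulr_sumr.
  apply: eq_bigr => i _; rewrite /bump /= add1n subSS.
  have hi : (i < n)%N := ltn_ord i.
  have -> : (n - i = (n - i.+1).+1)%N by rewrite subnS prednK // subn_gt0.
  by rewrite [p ^+ (_.+1)]exprS; ring.
have -> : \sum_(i < n.+1) ('C(n, i))%:R * (-1) ^+ (bump 0 i) * p ^+ (n.+1 - bump 0 i) *
     a (k + bump 0 i) =
   - \sum_(i < n.+1) 'C(n, i)%:R * (-1) ^+ i * p ^+ (n - i) * a (k.+1 + i).
  rewrite -sumrN; apply: eq_bigr => i _; rewrite /bump /= add1n subSS addnS exprS.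
  by rewrite addSn; ring.
rewrite !bin0 subn0 addn0 [p ^+ n.+1]exprS; ring.
Qed.

Hypothesis Ha : forall k, a k.+2 = p * a k.+1 - q * a k.

Lemma Sm_Z n k : Sm n k.+2 = p * Sm n k.+1 - q * Sm n k.
Proof.
elim: n k => [|n IH] k.
  by rewrite /Sm !big_ord1 /= !addn0 !subnn !expr0 !mulr1 !mul1r Ha.
rewrite !Sm_rec !IH; ring.
Qed.

Lemma Sm_step n : Sm n.+2 0 = p * Sm n.+1 0 - q * Sm n 0.
Proof.
rewrite Sm_rec [Sm n.+1 1]Sm_rec [Sm n.+1 0]Sm_rec Sm_Z; ring.
Qed.
End S.

Lemma W_rec (R : nzRingType) (delta gamma p q : R) k :
  W delta gamma p q k.+2 = p * W delta gamma p q k.+1 - q * W delta gamma p q k.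
Proof.
rewrite /W /=; by case: (Wpair delta gamma p q k).
Qed.

Theorem mainTheorem8 (R : idomainType) (delta gamma p q : R) :
  2%:R * gamma = p * delta ->
  let a := W delta gamma p q in
  (Ltrans (-1) p a = a) /\
  (forall n : nat, (1 <= n)%N ->
     \sum_(i < n) ('C(n, i))%:R * (-1) ^+ i * p ^+ (n - i) * a i =
     (if odd n then 2%:R * a n else 0)).
Proof.
move=> H a.
have La : forall n, Ltrans (-1) p a n = Sm _ p a n 0.
  by move=> n; rewrite /Ltrans /Sm; apply: eq_bigr => i _; rewrite add0n.
have Ha : forall k, a k.+2 = p * a k.+1 - q * a k by move=> k; apply: W_rec.
have E : forall n, Sm _ p a n 0 = a n /\ Sm _ p a n.+1 0 = a n.+1.
  elim=> [|n [IH1 IH2]].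
    split.
      by rewrite /Sm big_ord1 /= !(bin0, subnn, addn0, expr0, mulr1, mul1r).
    rewrite /Sm !big_ord_recl big_ord0 /= /bump /= !(bin0, bin1, subnn, subn0, addn0, expr0, expr1, mulr1, mul1r, addr0).
    rewrite /a /W /=.
    rewrite -H; ring.
  split => //.
  by rewrite (Sm_step _ _ _ _ Ha) IH1 IH2 Ha.
have L : Ltrans (-1) p a = a by apply: functional_extensionality => n; rewrite La; case: (E n).
split => // n _.
have := f_equal (fun f => f n) L; rewrite /Ltrans big_ord_recr /= subnn binn expr0 mulr1 mul1r => e.
have -> : \sum_(i < n) ('C(n, i))%:R * (-1) ^+ i * p ^+ (n - i) * a i = a n - (-1) ^+ n * a n.
  by rewrite -{1}e addrK.
rewrite -signr_odd; case: (odd n) => /=; rewrite ?expr0 ?expr1; ring.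
Qed.
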